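(* Let $\{r_n\}_{n\ge1}$ be a sequence of positive odd integers. For every $n\in\mathbb{N}$, $$\mathcal{L}\left(\{x\in\mathbb{I}\colon y_1(x)\le\tfrac{1}{r_1},\ y_2(x)\le\tfrac1{r_2},\dots,y_n(x)\le\tfrac1{r_n}\}\right)=\frac{1}{r_1r_2\cdots r_n}.$$
   Context: $\mathcal{L}$ is Lebesgue measure, $\mathbb{I}=(0,1)\setminus\mathbb{Q}$. Define $T\colon[0,1)\to[0,1)$ by: for $k\in\mathbb{N}$, $Tx=\lceil 1/x\rceil x-1$ if $x\in(\frac{1}{2k},\frac{1}{2k-1})$; $Tx=1-\lfloor 1/x\rfloor x$ if $x\in(\frac{1}{2k+1},\frac{1}{2k})$; $Tx=0$ if $x\in\{0\}\cup\{1/n\colon n\ge 2\}$. For $x\in(0,1)$ define $d_1(x)=\lceil 1/x\rceil$, $s_1(x)=1$ if $x\in[\frac{1}{2k},\frac{1}{2k-1})$ for some $k$, and $d_1(x)=\lfloor 1/x\rfloor$, $s_1(x)=-1$ if $x\in[\frac{1}{2k+1},\frac{1}{2k})$ for some $k$; $d_{n+1}(x)=d_1(T^nx)$, $s_{n+1}(x)=s_1(T^nx)$, $\epsilon_1(x)=1$, $\epsilon_{n+1}(x)=\prod_{k=1}^ns_k(x)$. For $x\in\mathbb{I}$ define $y_1(x)=x$ and, for $n\ge2$, $y_n(x)=(d_{n-1}(x)-1)T^{n-1}x$ if $\epsilon_n(x)=\epsilon_{n-1}(x)$, and $y_n(x)=(d_{n-1}(x)+1)T^{n-1}x$ if $\epsilon_n(x)=-\epsilon_{n-1}(x)$.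 *)

(* Defs.v *)
From HB Require Import structures.
From mathcomp Require Import all_boot all_order all_algebra.
From mathcomp Require Import all_classical all_reals all_analysis.
Set Implicit Arguments. Unset Strict Implicit. Unset Printing Implicit Defensive.
Import Order.TTheory GRing.Theory Num.Theory.
Local Open Scope ring_scope.
Local Open Scope classical_set_scope.

Section Defs.
Variable R : realType.

Definition irrational (x : R) : Prop := ~ exists q : rat, x = ratr q.

Definition Irr : set R := [set x | 0 < x < 1 /\ irrational x].

(* For x in (0,1):
   x in (1/(2k), 1/(2k-1))   <=>  2k-1 < 1/x < 2k    <=> floor(1/x) odd, 1/x not an integer
   x in (1/(2k+1), 1/(2k))   <=>  2k < 1/x < 2k+1    <=> floor(1/x) even, 1/x not an integer
   x in {0} U {1/n : n >= 2} <=>  x = 0 or 1/x integer (for x in [0,1)). *)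
Definition T (x : R) : R :=
  if x == 0 then 0
  else if (Num.floor x^-1)%:~R == x^-1 then 0
  else if odd `|Num.floor x^-1|%N then (Num.ceil x^-1)%:~R * x - 1
  else 1 - (Num.floor x^-1)%:~R * x.

(* For x in (0,1):
   x in [1/(2k), 1/(2k-1))  <=> 2k-1 < 1/x <= 2k  <=> ceil(1/x) even (= 2k);
   then d_1 = ceil(1/x), s_1 = 1.
   x in [1/(2k+1), 1/(2k)) <=> 2k < 1/x <= 2k+1 <=> ceil(1/x) odd (= 2k+1);
   then d_1 = floor(1/x), s_1 = -1. *)
Definition d1 (x : R) : int :=
  if ~~ odd `|Num.ceil x^-1|%N then Num.ceil x^-1 else Num.floor x^-1.
Definition s1 (x : R) : int :=
  if ~~ odd `|Num.ceil x^-1|%N then 1 else -1.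

(* d_n(x) = d_1(T^{n-1} x), s_n(x) = s_1(T^{n-1} x) for n >= 1 (index 0 unused) *)
Definition dn (n : nat) (x : R) : int := d1 (iter n.-1 T x).
Definition sn (n : nat) (x : R) : int := s1 (iter n.-1 T x).

Definition epsn (n : nat) (x : R) : int := \prod_(1 <= k < n) sn k x.

Definition yn (n : nat) (x : R) : R :=
  if (n <= 1)%N then x
  else if epsn n x == epsn n.-1 x
       then (dn n.-1 x - 1)%:~R * iter n.-1 T x
       else (dn n.-1 x + 1)%:~R * iter n.-1 T x.

End Defs.

(* Main.v *)
Require Import Defs.
From HB Require Import structures.
From mathcomp Require Import all_boot all_order all_algebra.
From mathcomp Require Import all_classical all_reals all_analysis.
From mathcomp Require Import measurable_realfun.
From mathcomp Require Import ring lra.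
Import Order.TTheory GRing.Theory Num.Theory.
Local Open Scope ring_scope.
Local Open Scope classical_set_scope.

Set Implicit Arguments. Unset Strict Implicit. Unset Printing Implicit Defensive.
Local Notation irr := Defs.irrational.
Local Notation TT := (@Defs.T _).
Section S.
Context {R : realType}.
Implicit Types (x : R).

Lemma irr_aff (c d : rat) x : c != 0 ->
  irr x -> irr (ratr c * x + ratr d).
Proof.
move=> c0 hx [q hq]; case: hx; exists ((q - d) / c).
rewrite fmorph_div rmorphB /= -hq; field.
by rewrite fmorph_eq0.
Qed.

Lemma irr_aff_inv (c d : rat) x : c != 0 ->
  irr (ratr c * x + ratr d) -> irr x.
Proof.
move=> c0 hx [q hq]; case: hx; exists (c * q + d).
by rewrite rmorphD rmorphM /= hq.
Qed.

Lemma irr_inv_nint x : irr x -> x^-1 \isn't a Num.int.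
Proof.
move=> hx; apply/negP => /intrP [z hz]; apply: hx.
exists (z%:~R^-1); rewrite fmorphV /= ratr_int -hz invrK //.
Qed.

Definition aj (j : nat) : R := if odd j then j.+1%:R else - j%:R.
Definition bj (j : nat) : R := if odd j then -1 else 1.
Definition hj (j : nat) x : R := aj j * x + bj j.
Definition cj (j : nat) : nat := if odd j then j else j.+1.

Lemma irr_hj j x : (0 < j)%N -> irr x -> irr (hj j x).
Proof.
move=> j0 hx; rewrite /hj /aj /bj; case: ifP => _.
  have := @irr_aff (j.+1)%:R (-1) x. rewrite (ratr_nat R) rmorphN rmorph1; apply => //.
have := @irr_aff (- j%:R) 1 x; rewrite rmorphN /= ratr_nat rmorph1; apply => //.
by rewrite oppr_eq0 pnatr_eq0 -lt0n.
Qed.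

Lemma irr_hj_inv j x : (0 < j)%N -> irr (hj j x) -> irr x.
Proof.
move=> j0; rewrite /hj /aj /bj; case: ifP => _.
  have := @irr_aff_inv (j.+1)%:R (-1) x; rewrite ratr_nat rmorphN rmorph1; apply => //.
have := @irr_aff_inv (- j%:R) 1 x; rewrite rmorphN /= ratr_nat rmorph1; apply => //.
by rewrite oppr_eq0 pnatr_eq0 -lt0n.
Qed.

Definition inB (j : nat) x := (j.+1%:R)^-1 < x < (j%:R)^-1.

Lemma inB_pos j x : (0 < j)%N -> inB j x -> 0 < x < 1.
Proof.
move=> j0 /andP[h1 h2]; apply/andP; split.
  by apply: lt_trans h1; rewrite invr_gt0 ltr0n.
by apply: (lt_le_trans h2); rewrite invf_le1 ?ltr0n // ler1n.
Qed.

Lemma inB_inv j x : (0 < j)%N -> inB j x -> j%:R < x^-1 < j.+1%:R.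
Proof.
move=> j0 hB; have /andP[x0 _] := inB_pos j0 hB; move: hB => /andP[h1 h2].
have jp : (j%:R : R) \is Num.pos by rewrite posrE ltr0n.
have j1p : (j.+1%:R : R) \is Num.pos by rewrite posrE ltr0n.
have xp : x \is Num.pos by rewrite posrE.
apply/andP; split.
  by rewrite -[X in X < _]invrK ltf_pV2 ?posrE ?invr_gt0 // -posrE.
by rewrite -[X in _ < X]invrK ltf_pV2 ?posrE ?invr_gt0 // -posrE.
Qed.

Lemma floor_inB j x : (0 < j)%N -> inB j x -> Num.floor x^-1 = j%:Z.
Proof.
move=> j0 hB; have /andP[h1 h2] := inB_inv j0 hB.
apply/eqP; rewrite floor_eq; apply/andP; split.
  by rewrite ltW.
by rewrite addrC -intS.
Qed.

Lemma ceil_inB j x : (0 < j)%N -> inB j x -> irr x -> Num.ceil x^-1 = j.+1%:Z.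
Proof.
move=> j0 hB hx; rewrite ceil_floor (floor_inB j0 hB) (negbTE (irr_inv_nint hx)) /=.
by rewrite addrC -intS.
Qed.

Lemma T_inB j x : (0 < j)%N -> inB j x -> irr x -> TT x = hj j x.
Proof.
move=> j0 hB hx; have /andP[x0 _] := inB_pos j0 hB.
have /andP[h1 h2] := inB_inv j0 hB.
rewrite /Defs.T gt_eqF // (floor_inB j0 hB) (ceil_inB j0 hB hx) /= -!pmulrn.
rewrite (_ : (j%:R == x^-1) = false); last by apply/negbTE; rewrite lt_eqF.
rewrite /hj /aj /bj; case: ifP => _; ring.
Qed.

Lemma s1_inB j x : (0 < j)%N -> inB j x -> irr x ->
  Defs.s1 x = if odd j then 1 else -1.
Proof.
move=> j0 hB hx; rewrite /Defs.s1 (ceil_inB j0 hB hx) /=.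
by case: (odd j).
Qed.

Lemma d1_inB j x : (0 < j)%N -> inB j x -> irr x ->
  Defs.d1 x = if odd j then j.+1%:Z else j%:Z.
Proof.
move=> j0 hB hx; rewrite /Defs.d1 (ceil_inB j0 hB hx) (floor_inB j0 hB) /=.
by case: (odd j).
Qed.

Definition Y x : R := if Defs.s1 x == 1 then (Defs.d1 x - 1)%:~R * TT x
  else (Defs.d1 x + 1)%:~R * TT x.

Lemma Y_inB j x : (0 < j)%N -> inB j x -> irr x -> Y x = (cj j)%:R * hj j x.
Proof.
move=> j0 hB hx; rewrite /Y (s1_inB j0 hB hx) (d1_inB j0 hB hx) (T_inB j0 hB hx) /cj.
case: (odd j) => /=.
  by rewrite -addn1 PoszD addrK -pmulrn.
by rewrite addrC -intS -pmulrn.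
Qed.

Lemma epsn_neq0 n x : Defs.epsn n x != 0.
Proof.
rewrite /Defs.epsn prodf_seq_neq0; apply/allP => i _ /=.
by rewrite /Defs.sn /Defs.s1; case: ifP.
Qed.

Lemma yn_S n x : (0 < n)%N -> Defs.yn n.+1 x = Y (iter n.-1 TT x).
Proof.
case: n => // n _; rewrite /Defs.yn /=.
have -> : Defs.epsn n.+2 x = Defs.epsn n.+1 x * Defs.sn n.+1 x.
  by rewrite /Defs.epsn big_nat_recr.
rewrite -{2}[Defs.epsn n.+1 x]mulr1 (inj_eq (mulfI (epsn_neq0 _ _))).
by rewrite /Y /Defs.dn /Defs.sn /=.
Qed.

Lemma yn1 x : Defs.yn 1 x = x. Proof. by []. Qed.
Lemma yn2 x : Defs.yn 2 x = Y x. Proof. by rewrite yn_S. Qed.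
Lemma ynSS n x : Defs.yn n.+3 x = Defs.yn n.+2 (TT x).
Proof. by rewrite !yn_S //= -iterS iterSr. Qed.

Definition Cond (r : nat -> nat) (m : nat) x :=
  forall i : nat, (1 <= i <= m)%N -> Defs.yn i x <= ((r i)%:R)^-1.

Definition rsh (j : nat) (r : nat -> nat) : nat -> nat :=
  fun i => if i == 1%N then (cj j * r 2%N)%N else r i.+1.

Lemma cmul_le (c r2 : nat) (t : R) : (0 < c)%N ->
  (c%:R * t <= (r2%:R)^-1) = (t <= ((c * r2)%N%:R)^-1).
Proof. by move=> c0; rewrite natrM invfM ler_pdivlMl ?ltr0n. Qed.

Lemma cj_gt0 j : (0 < cj j)%N.
Proof. by rewrite /cj; case: ifP => // /odd_gt0. Qed.

Lemma cond_rec j r m x : (0 < j)%N -> (0 < m)%N -> inB j x -> irr x ->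
  Cond r m.+1 x <-> (x <= ((r 1%N)%:R)^-1 /\ Cond (rsh j r) m (hj j x)).
Proof.
move=> j0 m0 hB hx; split.
  move=> H; split; first by have := H 1%N; rewrite yn1; apply.
  case=> [|[|i]] // hi.
    rewrite yn1 -cmul_le ?cj_gt0 // -(Y_inB j0 hB hx) -yn2; apply: H => //.
  by rewrite -(T_inB j0 hB hx) -ynSS; apply: H.
move=> [h1 H] [|[|[|i]]] // hi.
- rewrite yn2 (Y_inB j0 hB hx) cmul_le ?cj_gt0 //.
  by have := H 1%N; rewrite yn1 /rsh /=; apply.
- by rewrite ynSS (T_inB j0 hB hx); have := H i.+2; rewrite /rsh /=; apply.
Qed.

Lemma hj_range j x : (0 < j)%N -> inB j x <-> 0 < hj j x < ((cj j)%:R)^-1.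
Proof.
move=> j0; rewrite /inB /hj /aj /bj /cj.
have u0 : (0 : R) < j%:R by rewrite ltr0n.
have v0 : (0 : R) < j.+1%:R by rewrite ltr0n.
rewrite -[X in X < x]mulr1 -[X in x < X]mulr1 ltr_pdivrMl // ltr_pdivlMl //.
have -> : (j.+1%:R : R) = j%:R + 1 by rewrite -natr1.
case: ifP => _.
  rewrite -[(j%:R)^-1]mulr1 ltr_pdivlMl //.
  set u := (j%:R : R) in u0 v0 *.
  by split => /andP[h1 h2]; apply/andP; split; nra.
rewrite -[(j.+1%:R)^-1]mulr1 ltr_pdivlMl // -natr1 -mulNrn.
set u := (j%:R : R) in u0 v0 *.
by split => /andP[h1 h2]; apply/andP; split; nra.
Qed.

Lemma inv_inB j x : (0 < j)%N -> 0 < x -> j%:R < x^-1 < j.+1%:R -> inB j x.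
Proof.
move=> j0 x0 /andP[h1 h2]; apply/andP; split.
  by rewrite -[X in _ < X]invrK ltf_pV2 ?posrE ?invr_gt0 ?ltr0n.
by rewrite -[X in X < _]invrK ltf_pV2 ?posrE ?invr_gt0 ?ltr0n.
Qed.

Lemma loc x : 0 < x < 1 -> irr x -> exists2 j, (0 < j)%N & inB j x.
Proof.
move=> /andP[x0 x1] hx.
have xi1 : 1 < x^-1 by rewrite invf_gt1.
have := floor_itv x^-1; set z := Num.floor x^-1 => /andP[hz1 hz2].
have z1 : 1 <= z by rewrite floor_ge_int ltW.
have ez : z = (`|z|%N)%:Z by rewrite abszE ger0_norm // (le_trans _ z1).
exists `|z|%N; first by rewrite -ltz_nat -ez.
apply: inv_inB => //; first by rewrite -ltz_nat -ez.
rewrite ez in hz1 hz2; apply/andP; split.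
  rewrite lt_neqAle hz1 andbT; apply/negP => /eqP he.
  by move: (irr_inv_nint hx); rewrite -he intr_nat.
by rewrite addrC -intS in hz2.
Qed.

Notation mu := (@lebesgue_measure R).

Lemma aff_meas (a b : R) : measurable_fun setT (fun x : R => a * x + b).
Proof. apply: measurable_funD => //; exact: measurable_funM. Qed.

Lemma aff_pre_meas (a b : R) (A : set R) : measurable A ->
  measurable ((fun x => a * x + b) @^-1` A).
Proof. by move=> mA; rewrite -[X in measurable X]setTI; apply: aff_meas. Qed.

Lemma aff_scale (a b : R) (A : set R) : 0 < a -> measurable A ->
  mu ((fun x => a * x + b) @^-1` A) = ((a^-1)%:E * mu A)%E.
Proof.
move=> a0 mA.
pose m' := mscale (NngNum (ltW a0)) (pushforward mu (fun x : measurableTypeR R => (a * x + b : measurableTypeR R))).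
have := @lebesgue_measure_unique R (m' (aff_meas a b)) _ A mA.
rewrite /m' /mscale /pushforward /= => ->.
  by rewrite muleA -EFinM mulVf ?gt_eqF // mul1e.
move=> _ [[x y] _ <-].
rewrite /mscale /=.
rewrite [X in (_ * X)%E](_ : _ = mu (`](x - b) / a, (y - b) / a])); last first.
  rewrite [LHS]/pushforward; congr (mu _).
  apply/seteqP; split => z /=; rewrite !in_itv /= ler_pdivlMr // ltr_pdivrMr //
    [z * a]mulrC ltrBlDr lerBrDr //.
rewrite !lebesgue_measure_itv /= !lte_fin ltr_pM2r ?invr_gt0 // ltrD2r.
case: ifP => _; last by rewrite mule0.
rewrite -!EFinB -EFinM; congr (_%:E).
by field; rewrite gt_eqF.
Qed.

Lemma aff_scale' (a b : R) (A : set R) : a != 0 -> measurable A ->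
  mu ((fun x => a * x + b) @^-1` A) = ((`|a|^-1)%:E * mu A)%E.
Proof.
move=> a0 mA; have [ap|an] := ltP 0 a.
  by rewrite aff_scale // gtr0_norm.
have an' : a < 0 by rewrite lt_neqAle a0.
have -> : (fun x => a * x + b) @^-1` A =
    (fun x => (- a) * x + (- b)) @^-1` ((fun x => -1 * x + 0) @^-1` A).
  have e z : -1 * (- a * z - b) + 0 = a * z + b by ring.
  by apply/seteqP; split => z /=; rewrite e.
rewrite (@aff_scale (- a) (- b)) ?oppr_gt0 //; last exact: aff_pre_meas.
rewrite ltr0_norm //; congr (_ * _)%E.
have := @lebesgue_measureN R A mA; rewrite /pushforward => <-.
by congr (mu _); apply/seteqP; split => z /=; rewrite mulN1r addr0.
Qed.

Lemma Qc : countable (range (@ratr R)).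
Proof. exact: (card_le_trans (card_image_le _ _) (countableP setT)). Qed.

Lemma mQ : measurable (range (@ratr R)).
Proof. exact: countable_measurable (fun t => measurable_set1 t) Qc. Qed.

Lemma muIQ (a : R) : 0 < a -> mu (`]0, a] `\` range (@ratr R)) = a%:E.
Proof.
move=> a0.
have h0 : mu (`]0, a] `&` range (@ratr R)) = 0%E.
  apply/eqP; rewrite eq_le measure_ge0 andbT -(lebesgue_measure_rat R).
  apply: le_measure; [rewrite inE; apply: measurableI => //; exact: mQ|
    rewrite inE; exact: mQ| exact: subIsetr].
pose I : set R := `]0, a]; pose Q := range (@ratr R).
have e : mu I = (mu (I `\` Q) + mu (I `&` Q))%E.
  exact: (measureDI mu (measurable_itv `]0, a]%O) mQ).
move: e; rewrite h0 adde0 => <-; rewrite lebesgue_measure_itv /= lte_fin a0.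
by rewrite oppr0 adde0.
Qed.

Definition A (r : nat -> nat) (m : nat) : set R :=
  [set x | Defs.Irr x /\ Cond r m x].

Lemma irr_not1 x : irr x -> x != 1.
Proof. by move=> hx; apply/eqP => e; apply: hx; exists 1; rewrite rmorph1. Qed.

Lemma invn_le1 (n : nat) : (0 < n)%N -> ((n%:R : R)^-1 <= 1).
Proof. by move=> n0; rewrite invf_le1 ?ltr0n // ler1n. Qed.

Lemma A1 r : (0 < r 1%N)%N ->
  A r 1 = `](0:R), ((r 1%N)%:R)^-1] `\` range (@ratr R).
Proof.
move=> r0; apply/seteqP; split => x /=.
  move=> [[/andP[x0 x1] hx] C]; split.
    by rewrite in_itv /= x0 /=; have := C 1%N; rewrite yn1; apply.
  by move=> [q _ e]; apply: hx; exists q; rewrite e.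
rewrite in_itv /= => -[/andP[x0 xr] nq].
have hx : irr x by move=> [q e]; apply: nq; exists q.
split; last by move=> [|[|i]] // _; rewrite yn1.
split => //; apply/andP; split => //.
rewrite lt_neqAle irr_not1 //=; apply: (le_trans xr); exact: invn_le1.
Qed.

Lemma loc_ge (r1 : nat) x : (0 < r1)%N -> 0 < x -> x <= (r1%:R)^-1 -> irr x ->
  exists2 j, (r1 <= j)%N & inB j x.
Proof.
move=> r0 x0 xr hx.
have x1 : x < 1 by rewrite lt_neqAle irr_not1 //= (le_trans xr) // invn_le1.
have [j j0 hB] := loc (andb_true_intro (conj x0 x1)) hx.
exists j => //.
have := floor_inB j0 hB => /eqP; rewrite floor_eq => /andP[_ _].
have : (r1%:Z <= Num.floor x^-1)%R.
  rewrite floor_ge_int /=.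
  by rewrite -[X in X <= _]invrK lef_pV2 ?posrE ?invr_gt0 ?ltr0n.
by rewrite (floor_inB j0 hB) lez_nat.
Qed.

Lemma inB_le (r1 j : nat) x : (0 < r1)%N -> (r1 <= j)%N -> inB j x ->
  x <= (r1%:R)^-1.
Proof.
move=> r0 rj /andP[_ h]; apply/ltW/(lt_le_trans h).
by rewrite lef_pV2 ?posrE ?ltr0n ?ler_nat // (leq_trans r0).
Qed.

Lemma cj_odd j : odd (cj j).
Proof. by rewrite /cj; case: ifP => //= ->. Qed.

Lemma aj_neq0 j : (0 < j)%N -> aj j != 0.
Proof.
by move=> j0; rewrite /aj; case: ifP => _; rewrite ?oppr_eq0 pnatr_eq0 // -lt0n.
Qed.

Lemma aj_cj j : (0 < j)%N -> `|aj j| * (cj j)%:R = (j%:R * j.+1%:R : R).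
Proof.
move=> j0; rewrite /aj /cj; case: ifP => _.
  by rewrite ger0_norm // mulrC.
by rewrite normrN ger0_norm.
Qed.

Definition B (j : nat) : set R := `](j.+1%:R)^-1, (j%:R)^-1[.

Lemma muB j : (0 < j)%N -> mu (B j) = ((j%:R * j.+1%:R)^-1)%:E.
Proof.
move=> j0; rewrite /B lebesgue_measure_itv /= lte_fin.
rewrite ltf_pV2 ?posrE ?ltr0n // ltr_nat ltnSn -EFinD; congr (_%:E).
have h1 : (j%:R : R) != 0 by rewrite pnatr_eq0 -lt0n.
have h2 : (j%:R + 1 : R) != 0 by rewrite natr1 pnatr_eq0.
by rewrite -natr1; field; rewrite h1 h2.
Qed.

Lemma inB_B j x : inB j x <-> B j x.
Proof. by rewrite /B /= in_itv. Qed.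

Lemma prod_rsh j r m : (0 < m)%N ->
  (\prod_(1 <= i < m.+1) rsh j r i = cj j * \prod_(2 <= i < m.+2) r i)%N.
Proof.
move=> m0; rewrite big_ltn // [X in (_ = _ * X)%N]big_add1 /=.
rewrite [X in (_ = _ * X)%N]big_ltn // mulnA /rsh /=.
congr (_ * _)%N; apply: eq_big_nat => i /andP[i2 _].
by rewrite /rsh; case: eqP => // ei; rewrite ei in i2.
Qed.

Theorem main m : (0 < m)%N -> forall r : nat -> nat,
  (forall i, (1 <= i)%N -> (0 < r i)%N /\ odd (r i)) ->
  measurable (A r m) /\ mu (A r m) = ((((\prod_(1 <= i < m.+1) r i)%N)%:R)^-1)%:E.
Proof.
elim: m => // m IH _ r hr.
have [r1p _] := hr 1%N isT; have [r2p r2o] := hr 2%N isT.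
case: (posnP m) => [m0|mpos].
  subst m; rewrite A1 //; split.
    by apply: measurableD => //; exact: mQ.
  by rewrite muIQ ?invr_gt0 ?ltr0n // big_nat1.
set r1 := r 1%N in r1p *.
pose F k := hj (k + r1) @^-1` A (rsh (k + r1) r) m.
have hrs j : forall i, (1 <= i)%N -> (0 < rsh j r i)%N /\ odd (rsh j r i).
  move=> i i1; rewrite /rsh; case: eqP => _; last exact: hr.
  by rewrite muln_gt0 cj_gt0 r2p oddM cj_odd r2o.
have IHj j := IH mpos (rsh j r) (hrs j).
have kr0 k : (0 < k + r1)%N by rewrite addn_gt0 r1p orbT.
have mF k : measurable (F k).
  by apply: aff_pre_meas; case: (IHj (k + r1)).
have F_inB k x : F k x -> inB (k + r1) x.
  move=> [[/andP[h0 h1] hi] C].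
  apply/(hj_range _ (kr0 k)); apply/andP; split => //.
  have := C 1%N mpos; rewrite yn1 /rsh /= => C1.
  rewrite lt_neqAle; apply/andP; split.
    apply/eqP => e; apply: hi; exists ((cj (k + r1))%:R^-1).
    by rewrite e fmorphV /= ratr_nat.
  apply: (le_trans C1); rewrite lef_pV2 ?posrE ?ltr0n ?muln_gt0 ?cj_gt0 //.
  by rewrite ler_nat leq_pmulr.
have EQ : A r m.+1 = \bigcup_k F k.
  apply/seteqP; split => x.
    move=> [[/andP[x0 x1] hx] C].
    have xr : x <= (r1%:R)^-1 by have := C 1%N isT; rewrite yn1.
    have [j rj hB] := loc_ge r1p x0 xr hx.
    have j0 : (0 < j)%N := leq_trans r1p rj.
    exists (j - r1)%N => //; rewrite /F subnK //.
    have [_ C'] := (cond_rec r j0 mpos hB hx).1 C.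
    split => //; split; last exact: irr_hj.
    have /andP[h0 h1] := (hj_range x j0).1 hB.
    by rewrite h0 (lt_le_trans h1) // invn_le1 // cj_gt0.
  move=> [k _ Fx]; have hB := F_inB k x Fx.
  move: Fx => [[_ hi] C].
  have hx : irr x := irr_hj_inv (kr0 k) hi.
  split; first by split => //; exact: inB_pos (kr0 k) hB.
  apply/(cond_rec r (kr0 k) mpos hB hx); split => //.
  by apply: inB_le r1p _ hB; rewrite leq_addl.
have tF : trivIset setT F.
  move=> i k _ _ [x [/F_inB hi /F_inB hk]].
  have := floor_inB (kr0 i) hi; rewrite (floor_inB (kr0 k) hk) => -[].
  by move/eqP; rewrite eqn_add2r => /eqP.
have tB : trivIset setT (fun k => B (k + r1)).
  move=> i k _ _ [x [/inB_B hi /inB_B hk]].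
  have := floor_inB (kr0 i) hi; rewrite (floor_inB (kr0 k) hk) => -[].
  by move/eqP; rewrite eqn_add2r => /eqP.
set R2 := (\prod_(2 <= i < m.+2) r i)%N.
have muF k : mu (F k) = ((R2%:R^-1)%:E * mu (B (k + r1)))%E.
  have [mA muA] := IHj (k + r1).
  rewrite /F /hj aff_scale' ?aj_neq0 // muA prod_rsh // muB // -EFinM.
  congr (_%:E); rewrite natrM -(aj_cj (kr0 k)).
  have h1 : `|aj (k + r1)| != 0 by rewrite normr_eq0 aj_neq0.
  have h2 : ((cj (k + r1))%:R : R) != 0 by rewrite pnatr_eq0 -lt0n cj_gt0.
  have h3 : (R2%:R : R) != 0.
    rewrite pnatr_eq0 -lt0n /R2 big_nat_cond; apply: prodn_cond_gt0.
    by move=> i /andP[/andP[i2 _] _]; exact: (hr i (leq_trans _ i2)).1.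
  by field; rewrite h1 h2 h3.
rewrite EQ; split.
  exact: bigcupT_measurable.
have -> : mu (\bigcup_k F k) = (\sum_(0 <= k <oo | k \in setT) mu (F k))%E.
  by have := (measure_bigcup mu setT F (fun k _ => mF k) tF).
transitivity (\sum_(0 <= k <oo | k \in setT) ((R2%:R^-1)%:E * mu (B (k + r1))))%E.
  by apply: eq_eseriesr => k _; exact: muF.
rewrite nneseriesZl; last by move=> k _; exact: measure_ge0.
have <- : mu (\bigcup_k B (k + r1)) = (\sum_(0 <= k <oo | k \in setT) mu (B (k + r1)))%E.
  by have := (measure_bigcup mu setT (fun k => B (k + r1)) (fun k _ => measurable_itv _) tB).
have muU : mu (\bigcup_k B (k + r1)) = ((r1%:R)^-1)%:E.
  apply/eqP; rewrite eq_le; apply/andP; split.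
    have := @lebesgue_measure_itv R `](0:R), ((r1%:R)^-1)]%O.
    rewrite /= lte_fin invr_gt0 ltr0n r1p oppr0 adde0 => <-.
    apply: le_measure; rewrite ?inE //.
      by apply: bigcupT_measurable => k; exact: measurable_itv.
    move=> x [k _ /inB_B hB]; rewrite /= in_itv /=.
    rewrite (inB_le r1p _ hB) ?leq_addl // andbT.
    by have /andP[] := inB_pos (kr0 k) hB.
  rewrite -muIQ ?invr_gt0 ?ltr0n //.
  apply: le_measure; rewrite ?inE //.
      by apply: measurableD => //; exact: mQ.
    by apply: bigcupT_measurable => k; exact: measurable_itv.
  move=> x /=; rewrite in_itv /= => -[/andP[x0 xr] nq].
  have hx : irr x by move=> [q e]; apply: nq; exists q.
  have [j rj hB] := loc_ge r1p x0 xr hx.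
  by exists (j - r1)%N => //; rewrite subnK //; apply/inB_B.
rewrite muU -EFinM; congr (_%:E).
by rewrite big_ltn // natrM invfM mulrC.
Qed.

End S.

Theorem lemma3p6 (R : realType) (r : nat -> nat)
  (hr : forall i : nat, (1 <= i)%N -> (0 < r i)%N /\ odd (r i))
  (n : nat) (hn : (1 <= n)%N) :
  (@lebesgue_measure R)
    [set x | Irr x /\ forall i : nat, (1 <= i <= n)%N -> yn i x <= ((r i)%:R)^-1]
  = (((\prod_(1 <= i < n.+1) r i)%N)%:R^-1)%:E.
Proof. exact: (main hn hr).2. Qed.
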